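(* Let $\Gamma$ be a simple, undirected, connected graph with $p\ge 2$ vertices and maximum degree $\Delta\ge 1$. Then $\gamma_{[3R]}(\Gamma)\le 3p-3\Delta+1$.
   Context: For a graph $\Gamma=(V,E)$ and $h:V\to\{0,1,2,3,4\}$, let $AN(v)=\{w\in N(v):h(w)\ge 1\}$, $AN[v]=AN(v)\cup\{v\}$ and $h(S)=\sum_{u\in S}h(u)$. $h$ is a triple Roman dominating function (3RDF) if every $v$ with $h(v)<3$ satisfies $h(AN[v])\ge|AN(v)|+3$. The triple Roman domination number $\gamma_{[3R]}(\Gamma)$ is the minimum weight $h(V)$ of a 3RDF of $\Gamma$. *)

(* Defs.v *)
From mathcomp Require Import all_boot all_order.
Set Implicit Arguments. Unset Strict Implicit. Unset Printing Implicit Defensive.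

Definition simple_graph (T : finType) (e : rel T) : Prop :=
  symmetric e /\ irreflexive e.

Definition connected_graph (T : finType) (e : rel T) : Prop :=
  forall x y : T, connect e x y.

Definition nbhd (T : finType) (e : rel T) (v : T) : {set T} := [set w | e v w].
Definition deg (T : finType) (e : rel T) (v : T) : nat := #|nbhd e v|.
Definition max_deg (T : finType) (e : rel T) : nat := \max_(v : T) deg e v.

Definition wfun (T : finType) := {ffun T -> 'I_5}.

Definition AN (T : finType) (e : rel T) (h : wfun T) (v : T) : {set T} :=
  [set w in nbhd e v | 1 <= h w].
Definition hsum (T : finType) (h : wfun T) (S : {set T}) : nat :=
  \sum_(u in S) (h u : nat).

Definition is3RDF (T : finType) (e : rel T) (h : wfun T) : bool :=
  [forall v, (h v < 3) ==> (#|AN e h v| + 3 <= hsum h (v |: AN e h v))].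

Definition weight (T : finType) (h : wfun T) : nat := hsum h [set: T].

(* gamma_[3R] = minimum weight of a 3RDF; the default value 4|V| is an upper
   bound attained by the constant-4 function (a 3RDF), so it does not alter
   the minimum. *)
Definition gamma3R (T : finType) (e : rel T) : nat :=
  \big[minn/4 * #|T|]_(h : wfun T | is3RDF e h) weight h.

(* Main.v *)
Require Import Defs.
From mathcomp Require Import all_boot all_order.
From mathcomp Require Import zify.

Lemma bigmin_le (I : eqType) (s : seq I) (P : pred I) (F : I -> nat) x i :
  i \in s -> P i -> \big[minn/x]_(j <- s | P j) F j <= F i.
Proof.
elim: s => [//|a s IH]; rewrite in_cons big_cons => /orP [/eqP <- Pi|iS Pi].
  by rewrite Pi geq_minl.
case: (P a); last exact: IH.
by rewrite geq_min IH ?orbT.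
Qed.

Theorem proposition7 (T : finType) (e : rel T) :
  simple_graph e -> connected_graph e ->
  2 <= #|T| -> 1 <= max_deg e ->
  gamma3R e <= 3 * #|T| - 3 * max_deg e + 1.
Proof.
move=> [esym eirr] _ hT hD.
have T0 : 0 < #|T| by lia.
have [v hv] := eq_bigmax (deg e) T0.
rewrite /max_deg hv in hD *.
pose h : wfun T := [ffun u => if u == v then @Ordinal 5 4 isT
                               else if e v u then @Ordinal 5 0 isT
                               else @Ordinal 5 3 isT].
have hval u : (h u : nat) = if u == v then 4 else if e v u then 0 else 3.
  by rewrite /h ffunE; case: (u == v); case: (e v u).
have h3 : is3RDF e h.
  apply/forallP => w; apply/implyP; rewrite hval.
  case: eqP => [//|/eqP wv].
  case: ifP => [evw _|//].
  have vin : v \in AN e h w.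
    by rewrite inE /nbhd inE esym evw hval eqxx.
  have wnot : w \notin AN e h w by rewrite inE /nbhd inE eirr.
  rewrite /hsum big_setU1 //= hval (negbTE wv) evw add0n.
  rewrite (bigD1 v) //= hval eqxx.
  have K : #|AN e h w :\ v| <= \sum_(i in AN e h w | i != v) (h i : nat).
    rewrite -sum1_card [X in _ <= X](eq_bigl (fun i => i \in AN e h w :\ v)); last first.
      by move=> i; rewrite in_setD1 andbC.
    apply: leq_sum => u; rewrite in_setD1 => /andP [_]; by rewrite /AN in_set => /andP [_].
  rewrite (cardsD1 v) vin; lia.
have hw : weight h = 3 * #|T| - 3 * deg e v + 1.
  rewrite /weight /hsum (bigD1 v) //= hval eqxx.
  have -> : \sum_(i in [set: T] | i != v) (h i : nat)
         = \sum_(i in [set~ v] :\: nbhd e v) 3.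
    rewrite big_mkcond [RHS]big_mkcond; apply: eq_bigr => u _.
    rewrite !inE hval; by case: (u == v) => /=; case: (e v u).
  rewrite sum_nat_const.
  have := cardsID (nbhd e v) [set~ v].
  have -> : [set~ v] :&: nbhd e v = nbhd e v.
    apply/setIidPr/subsetP => u; rewrite /nbhd !inE.
    by apply: contraTN => /eqP ->; rewrite eirr.
  rewrite cardsC1 /deg => H; rewrite -(prednK T0) -H; lia.
rewrite -hw; apply: bigmin_le => //; by rewrite /index_enum -enumT mem_enum.
Qed.
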